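(* Let $T$ be a bounded linear operator on a complex Hilbert space, and suppose $T^k$ is quasiposinormal and $T^\ell$ is coquasiposinormal for some positive integers $k,\ell$. Then $T^m$ is both quasiposinormal and coquasiposinormal for every integer $m\ge m_0$, where $m_0=\operatorname{lcm}(k,\ell)$. Moreover: (a) if $\operatorname{dsc}(T)=1$, then $T$ is quasiposinormal; (b) if $\operatorname{asc}(T)=1$, then $T$ is coquasiposinormal.
   Context: $\mathcal{N}(A)$ and $\mathcal{R}(A)$ denote kernel and range. $A$ is quasiposinormal if $\mathcal{N}(A)\subseteq\mathcal{N}(A^* )$, and coquasiposinormal if $\mathcal{N}(A^* )\subseteq\mathcal{N}(A)$. The ascent $\operatorname{asc}(A)$ is the least integer $m\ge0$ with $\mathcal{N}(A^m)=\mathcal{N}(A^{m+1})$, and the descent $\operatorname{dsc}(A)$ is the least integer $m\ge0$ with $\mathcal{R}(A^{m+1})=\mathcal{R}(A^m)$ (when such integers exist). *)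

(* Defs.v *)
From HB Require Import structures.
From mathcomp Require Import all_boot all_order all_algebra.
From mathcomp Require Import reals complex.
From mathcomp Require Import classical_sets.
Set Implicit Arguments. Unset Strict Implicit. Unset Printing Implicit Defensive.
Import Order.TTheory GRing.Theory Num.Theory.
Local Open Scope ring_scope.
Local Open Scope complex_scope.
Local Open Scope classical_set_scope.

Section HilbertDefs.
Variables (R : realType) (V : lmodType R[i]).
Variable ip : V -> V -> R[i].

Definition is_inner_product : Prop :=
  [/\ forall (a : R[i]) (x y z : V), ip (a *: x + y) z = a * ip x z + ip y z,
      forall x y : V, ip y x = (ip x y)^*,
      forall x : V, 0 <= ip x x
    & forall x : V, ip x x = 0 -> x = 0].

(* completeness for the induced norm ||x||^2 = ip x x *)
Definition ip_complete : Prop :=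
  forall u : nat -> V,
    (forall eps : R, 0 < eps -> exists N : nat, forall m n : nat,
        (N <= m)%N -> (N <= n)%N -> ip (u m - u n) (u m - u n) < (eps ^+ 2)%:C) ->
    exists x : V, forall eps : R, 0 < eps -> exists N : nat, forall n : nat,
        (N <= n)%N -> ip (u n - x) (u n - x) < (eps ^+ 2)%:C.

Definition hilbert_space : Prop := is_inner_product /\ ip_complete.

Definition bounded_linear (T : V -> V) : Prop :=
  (forall (a : R[i]) (x y : V), T (a *: x + y) = a *: T x + T y) /\
  exists C : R, forall x : V, ip (T x) (T x) <= C%:C * ip x x.

Definition is_adjoint (A B : V -> V) : Prop :=
  forall x y : V, ip (A x) y = ip x (B y).

Definition kernel (A : V -> V) : set V := [set x | A x = 0].
Definition range (A : V -> V) : set V := [set y | exists x, A x = y].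

Definition opow (T : V -> V) (m : nat) : V -> V := iter m T.

Definition quasiposinormal (A : V -> V) : Prop :=
  forall B, is_adjoint A B -> kernel A `<=` kernel B.
Definition coquasiposinormal (A : V -> V) : Prop :=
  forall B, is_adjoint A B -> kernel B `<=` kernel A.

Definition ascent_is (T : V -> V) (m : nat) : Prop :=
  kernel (opow T m) = kernel (opow T m.+1) /\
  forall j : nat, (j < m)%N -> kernel (opow T j) <> kernel (opow T j.+1).

Definition descent_is (T : V -> V) (m : nat) : Prop :=
  range (opow T m.+1) = range (opow T m) /\
  forall j : nat, (j < m)%N -> range (opow T j.+1) <> range (opow T j).

End HilbertDefs.

(* Main.v *)
Require Import Defs.
From HB Require Import structures.
From mathcomp Require Import all_boot all_order all_algebra.
From mathcomp Require Import reals complex.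
From mathcomp Require Import boolp classical_sets.
From mathcomp Require Import ring lra.
From mathcomp Require Import archimedean.
Set Implicit Arguments. Unset Strict Implicit. Unset Printing Implicit Defensive.
Import Order.TTheory GRing.Theory Num.Theory.
Local Open Scope ring_scope.
Local Open Scope complex_scope.
Local Open Scope classical_set_scope.

Definition Qn (R : realType) (V : lmodType R[i]) (ip : V -> V -> R[i]) (x : V) : R :=
  complex.Re (ip x x).

Lemma ip0l (R : realType) (V : lmodType R[i]) (ip : V -> V -> R[i])
  (hip : is_inner_product ip) (z : V) : ip 0 z = 0.
Proof.
case: hip => hl _ _ _.
have h := hl 1 0 0 z; rewrite scale1r addr0 mul1r in h.
by apply: (addrI (ip 0 z)); rewrite addr0 -h.
Qed.

Lemma ipDl (R : realType) (V : lmodType R[i]) (ip : V -> V -> R[i])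
  (hip : is_inner_product ip) (x y z : V) : ip (x + y) z = ip x z + ip y z.
Proof. by case: hip => hl _ _ _; rewrite -[x]scale1r hl mul1r scale1r. Qed.

Lemma ipZl (R : realType) (V : lmodType R[i]) (ip : V -> V -> R[i])
  (hip : is_inner_product ip) a (x z : V) : ip (a *: x) z = a * ip x z.
Proof.
have := hip; case => hl _ _ _.
by rewrite -[a *: x]addr0 hl ip0l // addr0.
Qed.

Lemma ipNl (R : realType) (V : lmodType R[i]) (ip : V -> V -> R[i])
  (hip : is_inner_product ip) (x z : V) : ip (- x) z = - ip x z.
Proof. by rewrite -scaleN1r ipZl // mulN1r. Qed.

Lemma ipC (R : realType) (V : lmodType R[i]) (ip : V -> V -> R[i])
  (hip : is_inner_product ip) (x y : V) : ip y x = (ip x y)^*.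
Proof. by case: hip. Qed.

Lemma ip0r (R : realType) (V : lmodType R[i]) (ip : V -> V -> R[i])
  (hip : is_inner_product ip) (z : V) : ip z 0 = 0.
Proof. by rewrite ipC // ip0l // conjc0. Qed.

Lemma ipDr (R : realType) (V : lmodType R[i]) (ip : V -> V -> R[i])
  (hip : is_inner_product ip) (x y z : V) : ip z (x + y) = ip z x + ip z y.
Proof. by rewrite ipC // ipDl // rmorphD /= -!(ipC hip). Qed.

Lemma ipZr (R : realType) (V : lmodType R[i]) (ip : V -> V -> R[i])
  (hip : is_inner_product ip) a (x z : V) : ip z (a *: x) = a^* * ip z x.
Proof. by rewrite ipC // ipZl // rmorphM /= -(ipC hip). Qed.

Lemma ipxx (R : realType) (V : lmodType R[i]) (ip : V -> V -> R[i])
  (hip : is_inner_product ip) (x : V) : ip x x = (Qn ip x)%:C.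
Proof.
have := hip; case => _ _ hp _.
by rewrite /Qn RRe_real // ger0_real.
Qed.

Lemma Qn_ge0 (R : realType) (V : lmodType R[i]) (ip : V -> V -> R[i])
  (hip : is_inner_product ip) (x : V) : 0 <= Qn ip x.
Proof.
have := hip; case => _ _ hp _.
by rewrite -lecR -ipxx.
Qed.

Lemma Qn_eq0 (R : realType) (V : lmodType R[i]) (ip : V -> V -> R[i])
  (hip : is_inner_product ip) (x : V) : Qn ip x = 0 -> x = 0.
Proof.
have := hip; case => _ _ _ hd h.
by apply: hd; rewrite ipxx // h.
Qed.

Lemma Qn_exp (R : realType) (V : lmodType R[i]) (ip : V -> V -> R[i])
  (hip : is_inner_product ip) (x w : V) (t : R[i]) :
  Qn ip (x + t *: w) = Qn ip x + 2 * complex.Re (t * ip w x)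
     + (complex.Re t ^+ 2 + complex.Im t ^+ 2) * Qn ip w.
Proof.
rewrite /Qn ipDl // !(ipDr hip).
rewrite !(ipZl hip) !(ipZr hip).
rewrite (ipC hip x w) (ipxx hip w) (ipxx hip x).
case: t => t1 t2; case: (ip x w) => c1 c2.
simpc; rewrite /=; ring.
Qed.


Lemma Qn_expr (R : realType) (V : lmodType R[i]) (ip : V -> V -> R[i])
  (hip : is_inner_product ip) (x w : V) (r : R) :
  Qn ip (x + r%:C *: w) = Qn ip x + 2 * r * complex.Re (ip w x) + r ^+ 2 * Qn ip w.
Proof.
rewrite (Qn_exp hip); case: (ip w x) => c1 c2; simpc; rewrite /=; ring.
Qed.

Lemma ipNr (R : realType) (V : lmodType R[i]) (ip : V -> V -> R[i])
  (hip : is_inner_product ip) (x z : V) : ip z (- x) = - ip z x.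
Proof. by rewrite (ipC hip) (ipNl hip) rmorphN /= -(ipC hip). Qed.

Lemma Re_ipC (R : realType) (V : lmodType R[i]) (ip : V -> V -> R[i])
  (hip : is_inner_product ip) (x y : V) :
  complex.Re (ip y x) = complex.Re (ip x y).
Proof. by rewrite (ipC hip); case: (ip x y). Qed.

Lemma CS_re (R : realType) (V : lmodType R[i]) (ip : V -> V -> R[i])
  (hip : is_inner_product ip) (x w : V) :
  complex.Re (ip w x) ^+ 2 <= Qn ip x * Qn ip w.
Proof.
have qx := Qn_ge0 hip x; have qw := Qn_ge0 hip w.
have [q0|qpos] := eqVneq (Qn ip w) 0.
  by rewrite q0 mulr0 (Qn_eq0 hip q0) (ip0l hip) /= expr0n.
have qp : 0 < Qn ip w by rewrite lt_def qpos.
set c := complex.Re (ip w x).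
have := Qn_ge0 hip (x + (- c / Qn ip w)%:C *: w).
rewrite (Qn_expr hip) -/c => h.
have e : (- c / Qn ip w) * Qn ip w = - c by rewrite mulfVK.
nra.
Qed.

Lemma ip_nondeg (R : realType) (V : lmodType R[i]) (ip : V -> V -> R[i])
  (hip : is_inner_product ip) (u v : V) :
  (forall y, ip y u = ip y v) -> u = v.
Proof.
move=> h; apply/eqP; rewrite -subr_eq0; apply/eqP.
have := hip; case => _ _ _ hd; apply: hd.
by rewrite (ipDr hip) (ipNr hip) h subrr.
Qed.

Lemma adj_ker (R : realType) (V : lmodType R[i]) (ip : V -> V -> R[i])
  (hip : is_inner_product ip) (A B : V -> V) (x : V) :
  is_adjoint ip A B -> (B x = 0 <-> forall y, ip (A y) x = 0).
Proof.
move=> hAB; split.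
  by move=> hx y; rewrite hAB hx (ip0r hip).
move=> h; apply: (ip_nondeg hip) => y; rewrite -hAB h (ip0r hip) //.
Qed.
Lemma small_inv (R : realType) (e : R) : 0 < e ->
  exists N : nat, forall n : nat, (N <= n)%N -> (n.+1%:R)^-1 < e.
Proof.
move=> e0; exists (Num.bound e^-1) => n hn.
have ei : 0 < e^-1 by rewrite invr_gt0.
have h1 := archi_boundP (ltW ei).
have h2 : (Num.bound e^-1)%:R < n.+1%:R :> R by rewrite ltr_nat ltnS.
rewrite -[e]invrK ltf_pV2 ?posrE ?invr_gt0 ?ltr0Sn //.
exact: lt_trans h1 h2.
Qed.



Lemma sq_bound (R : realType) (d c : R) : 0 < d -> c ^+ 2 <= d ^+ 2 -> - d <= c <= d.
Proof.
move=> d0 h; have : `|c| <= d.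
  rewrite -ler_sqr ?nnegrE ?normr_ge0 ?(ltW d0) //.
  by rewrite real_normK ?num_real.
by rewrite ler_norml.
Qed.

Lemma riesz (R : realType) (V : lmodType R[i]) (ip : V -> V -> R[i])
  (hip : is_inner_product ip) (hc : ip_complete ip) (f : V -> R[i]) (K : R) :
  0 <= K -> (forall a x y, f (a *: x + y) = a * f x + f y) ->
  (forall x, complex.Re (f x) ^+ 2 <= K * Qn ip x) ->
  exists z, forall w, f w = ip w z.
Proof.
move=> K0 flin fb.
have f0 : f 0 = 0.
  have h := flin 1 0 0; rewrite scale1r addr0 mul1r in h.
  by apply: (addrI (f 0)); rewrite addr0 -h.
have fD : forall x y, f (x + y) = f x + f y.
  by move=> x y; rewrite -[x]scale1r flin mul1r scale1r.
have fZ : forall a x, f (a *: x) = a * f x.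
  by move=> a x; rewrite -[a *: x]addr0 flin f0 addr0.
pose J x := Qn ip x - 2 * complex.Re (f x).
have Jlb : forall x, - K <= J x.
  move=> x; rewrite /J; have := fb x; have := Qn_ge0 hip x.
  set q := Qn ip x; set r := complex.Re (f x) => q0 h.
  have h3 := sqr_ge0 (q - K).
  have h2 : (2 * r) ^+ 2 <= (q + K) ^+ 2 by nra.
  suff : 2 * r <= q + K by lra.
  apply: le_trans (ler_norm _) _.
  by rewrite -ler_sqr ?nnegrE // ?addr_ge0 // real_normK // num_real.
pose E := [set r | exists x, r = J x].
have hlb : has_lbound E by exists (- K) => r [x ->].
have hinf : has_inf E by split => //; exists (J 0), 0.
pose d := inf E.
have dle : forall x, d <= J x by move=> x; apply: (ge_inf hlb); exists x.
have hs : forall n : nat, exists x, J x < d + (n.+1%:R)^-1.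
  move=> n; have ep : 0 < (n.+1%:R : R)^-1 by rewrite invr_gt0 ltr0Sn.
  by have [e [x ->] he] := inf_adherent ep hinf; exists x.
have [u hu] := choice hs.
have fR : forall (r : R) z, complex.Re (r%:C * z) = r * complex.Re z.
  by move=> r [z1 z2]; rewrite /= mul0r subr0.
have mid : forall a b, Qn ip (a - b) =
    2 * J a + 2 * J b - 4 * J ((2^-1 : R)%:C *: (a + b)).
  move=> a b.
  have e1 : a - b = a + (-1 : R)%:C *: b by rewrite rmorphN1 scaleN1r.
  have e2 : a + b = a + (1 : R)%:C *: b by rewrite rmorph1 scale1r.
  have e3 : (2^-1 : R)%:C *: (a + b) = 0 + (2^-1 : R)%:C *: (a + b) by rewrite add0r.
  rewrite /J fZ fD fR e1 (Qn_expr hip).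
  rewrite e3 (Qn_expr hip) (ip0r hip) e2 (Qn_expr hip).
  have -> : Qn ip 0 = 0 by rewrite /Qn (ip0l hip).
  have -> : complex.Re (f a + f b) = complex.Re (f a) + complex.Re (f b).
    by case: (f a) => ? ?; case: (f b).
  rewrite [complex.Re 0]/=.
  set qa := Qn ip a; set qb := Qn ip b; set c := complex.Re (ip b a).
  set fa := complex.Re (f a); set fb' := complex.Re (f b).
  by field.
have cauchy : forall n m, Qn ip (u n - u m) <= 2 * (n.+1%:R)^-1 + 2 * (m.+1%:R)^-1.
  move=> n m; rewrite mid; have := hu n; have := hu m.
  have := dle ((2^-1 : R)%:C *: (u n + u m)).
  move=> h1 h2 h3.
  set A := J _ in h1 *; set B := J (u m) in h2 *; set C := J (u n) in h3 *.
  set x := n.+1%:R^-1 in h3 *; set y := m.+1%:R^-1 in h2 *.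
  lra.
have [z hz] : exists z, forall eps : R, 0 < eps -> exists N : nat, forall n : nat,
    (N <= n)%N -> Qn ip (u n - z) < eps ^+ 2.
  have [|z hz] := hc u.
    move=> eps he; have he4 : 0 < eps ^+ 2 / 4 by rewrite divr_gt0 // exprn_gt0.
    have [N hN] := small_inv he4; exists N => m n hm hn.
    rewrite (ipxx hip) ltcR; apply: le_lt_trans (cauchy m n) _.
    have := hN _ hm; have := hN _ hn.
    set x := n.+1%:R^-1; set y := m.+1%:R^-1; lra.
  exists z => eps he; have [N hN] := hz eps he; exists N => n hn.
  by rewrite -ltcR -(ipxx hip); apply: hN.
have ReD : forall a b : R[i], complex.Re (a + b) = complex.Re a + complex.Re b.
  by move=> [? ?] [? ?].
have Jz : J z <= d.
  apply/ler_addgt0Pr => eta he.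
  pose M := Qn ip z + K + 1.
  have M1 : 1 <= M by have := Qn_ge0 hip z; rewrite /M; lra.
  have M0 : 0 < M by lra.
  pose del := eta / 8.
  have hdel : 0 < del by rewrite /del; lra.
  have [N1 hN1] := hz (del / M) (divr_gt0 hdel M0).
  have he2 : 0 < eta / 2 by lra.
  have [N2 hN2] := small_inv he2.
  pose n := maxn N1 N2.
  have h1 := hN1 n (leq_maxl _ _); have h2 := hN2 n (leq_maxr _ _); have h3 := hu n.
  set e := u n - z in h1.
  have eu : u n = z + (1 : R)%:C *: e by rewrite rmorph1 scale1r addrC subrK.
  have hJ : J (u n) = J z + 2 * complex.Re (ip e z) + Qn ip e - 2 * complex.Re (f e).
    rewrite /J eu (Qn_expr hip) fD fZ rmorph1 mul1r ReD; lra.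
  have c1 := CS_re hip z e; have c2 := fb e.
  have qe0 := Qn_ge0 hip e; have qz0 := Qn_ge0 hip z.
  have hM : M * (del / M) ^+ 2 <= del ^+ 2.
    have -> : M * (del / M) ^+ 2 = del ^+ 2 / M by field; rewrite gt_eqF.
    rewrite ler_pdivrMr //; have := sqr_ge0 del; nra.
  have d1 : complex.Re (ip e z) ^+ 2 <= del ^+ 2.
    apply: le_trans c1 _; apply: le_trans hM.
    apply: le_trans (_ : M * Qn ip e <= _); first by rewrite /M; nra.
    by rewrite ler_pM2l // ltW.
  have d2 : complex.Re (f e) ^+ 2 <= del ^+ 2.
    apply: le_trans c2 _; apply: le_trans hM.
    apply: le_trans (_ : M * Qn ip e <= _); first by rewrite /M; nra.
    by rewrite ler_pM2l // ltW.
  have /andP[a1 a2] := sq_bound hdel d1; have /andP[b1 b2] := sq_bound hdel d2.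
  move: h3; rewrite hJ; set x := n.+1%:R^-1 in h2 *; rewrite /del in a1 b2; lra.
exists z => w.
have H : forall t : R[i], 0 <= 2 * complex.Re (t * ip w z) - 2 * complex.Re (t * f w)
    + (complex.Re t ^+ 2 + complex.Im t ^+ 2) * Qn ip w.
  move=> t; have := dle (z + t *: w); move: Jz.
  rewrite /J (Qn_exp hip) fD fZ ReD; lra.
have qw := Qn_ge0 hip w.
move: H; case: (ip w z) => p1 p2; case: (f w) => g1 g2 H.
pose s := (Qn ip w + 1)^-1.
have s0 : 0 < s by rewrite /s invr_gt0; lra.
have sq : s * Qn ip w = 1 - s.
  rewrite /s; field; lra.
have := H ((- (s * (p1 - g1))) +i* (s * (p2 - g2))).
rewrite /=.
set A := (p1 - g1) ^+ 2 + (p2 - g2) ^+ 2.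
move=> H2.
have e : 2 * (- (s * (p1 - g1)) * p1 - s * (p2 - g2) * p2) -
  2 * (- (s * (p1 - g1)) * g1 - s * (p2 - g2) * g2) +
  ((- (s * (p1 - g1))) ^+ 2 + (s * (p2 - g2)) ^+ 2) * Qn ip w
  = - (s * A) * (1 + s) + s * A * (s * Qn ip w - (1 - s)) by rewrite /A; ring.
rewrite e sq subrr mulr0 addr0 in H2.
have A0 : A <= 0 by nra.
have e1 : p1 - g1 = 0 by have := sqr_ge0 (p2 - g2); rewrite /A in A0; nra.
have e2 : p2 - g2 = 0 by have := sqr_ge0 (p1 - g1); rewrite /A in A0; nra.
by congr (_ +i* _); apply/eqP; rewrite eq_sym -subr_eq0; apply/eqP.
Qed.



Lemma adj_exists (R : realType) (V : lmodType R[i]) (ip : V -> V -> R[i])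
  (hV : hilbert_space ip) (T : V -> V) (hT : bounded_linear ip T) :
  exists S, is_adjoint ip T S.
Proof.
case: hV => hip hc; case: hT => Tlin [C hC].
pose C' := Num.max C 0.
have hC' : forall x, Qn ip (T x) <= C' * Qn ip x.
  move=> x; have := hC x; rewrite !(ipxx hip) -rmorphM /= lecR => h.
  apply: le_trans h _; apply: ler_wpM2r; first exact: Qn_ge0.
  by rewrite le_max lexx.
have h : forall y, exists z, forall x, ip (T x) y = ip x z.
  move=> y; apply: (riesz hip hc (K := Qn ip y * C')).
  - by rewrite mulr_ge0 ?Qn_ge0 // le_max lexx orbT.
  - by move=> a x x'; rewrite Tlin (ipDl hip) (ipZl hip).
  - move=> x; apply: le_trans (CS_re hip y (T x)) _.
    by rewrite -mulrA; apply: ler_wpM2l; [exact: Qn_ge0 | exact: hC'].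
have [S hS] := choice h; exists S => x y; exact: hS.
Qed.



Lemma iter0v (R : realType) (V : lmodType R[i]) (F : V -> V) (F0 : F 0 = 0) j :
  iter j F 0 = 0.
Proof. by elim: j => //= j ->. Qed.

Lemma kerup (R : realType) (V : lmodType R[i]) (F : V -> V) (F0 : F 0 = 0) k m x :
  (k <= m)%N -> iter k F x = 0 -> iter m F x = 0.
Proof.
move=> km hk; rewrite -(subnK km) iterD hk; exact: iter0v.
Qed.

Lemma stab (R : realType) (V : lmodType R[i]) (F : V -> V) (F0 : F 0 = 0) k :
  (0 < k)%N -> (forall v, iter (k + k) F v = 0 -> iter k F v = 0) ->
  forall m x, (k <= m)%N -> iter m F x = 0 -> iter k F x = 0.
Proof.
move=> k0 hk.
have step : forall n x, (k <= n)%N -> iter n.+1 F x = 0 -> iter n F x = 0.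
  move=> n x kn h.
  have e1 : iter n.+1 F x = iter k.+1 F (iter (n - k) F x).
    by rewrite -iterD addSn addnC subnK.
  have e2 : iter n F x = iter k F (iter (n - k) F x) by rewrite -iterD addnC subnK.
  rewrite e2; apply: hk.
  have -> : (k + k = (k.-1) + k.+1)%N by rewrite addnS -addSn prednK.
  by rewrite iterD -e1 h iter0v.
move=> m x km; rewrite -(subnK km); elim: (m - k)%N => [|j IH] //.
by rewrite addSn => h; apply: IH; apply: (step _ _ _ h); rewrite leq_addl.
Qed.

Lemma asc1 (R : realType) (V : lmodType R[i]) (ip : V -> V -> R[i])
  (hip : is_inner_product ip) (A B : V -> V) :
  is_adjoint ip A B -> (forall x, A x = 0 -> B x = 0) ->
  forall v, A (A v) = 0 -> A v = 0.
Proof.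
move=> hAB hk v h; have := hip; case => _ _ _ hd; apply: hd.
by rewrite hAB hk // (ip0r hip).
Qed.

Lemma adj_sym (R : realType) (V : lmodType R[i]) (ip : V -> V -> R[i])
  (hip : is_inner_product ip) (A B : V -> V) :
  is_adjoint ip A B -> is_adjoint ip B A.
Proof. by move=> h x y; rewrite (ipC hip) -h -(ipC hip). Qed.

Lemma adj_pow (R : realType) (V : lmodType R[i]) (ip : V -> V -> R[i])
  (A B : V -> V) : is_adjoint ip A B -> forall j, is_adjoint ip (iter j A) (iter j B).
Proof.
move=> h; elim=> [|j IH] x y //=.
by rewrite h IH -iterSr.
Qed.

Local Close Scope classical_set_scope.
Local Close Scope complex_scope.


Theorem theorem5p8 (R : realType) (V : lmodType R[i]) (ip : V -> V -> R[i])
  (hV : hilbert_space ip) (T : V -> V) (hT : bounded_linear ip T)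
  (k l : nat) (hk : (0 < k)%N) (hl : (0 < l)%N)
  (hqk : quasiposinormal ip (opow T k))
  (hcl : coquasiposinormal ip (opow T l)) :
  (forall m : nat, (lcmn k l <= m)%N ->
     quasiposinormal ip (opow T m) /\ coquasiposinormal ip (opow T m)) /\
  (descent_is T 1 -> quasiposinormal ip T) /\
  (ascent_is T 1 -> coquasiposinormal ip T).
Proof.
have [S hS] := adj_exists hV hT.
have hip := hV.1.

have T0 : T 0 = 0.
  case: hT => Tlin _; have h := Tlin 1 0 0; rewrite scale1r addr0 scale1r in h.
  by apply: (addrI (T 0)); rewrite addr0 -h.
have S0 : S 0 = 0 by apply/(adj_ker hip _ hS) => y; rewrite (ip0r hip).
have hSj := adj_pow hS.
have uniq : forall j B x, is_adjoint ip (iter j T) B -> B x = iter j S x.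
  move=> j B x hB; apply: (ip_nondeg hip) => y; by rewrite -hB hSj.
have QK : forall x, iter k T x = 0 -> iter k S x = 0.
  by move=> x; apply: (hqk _ (hSj k) x).
have CL : forall x, iter l S x = 0 -> iter l T x = 0.
  by move=> x; apply: (hcl _ (hSj l) x).
have stT : forall m x, (k <= m)%N -> iter m T x = 0 -> iter k T x = 0.
  move=> m x; apply: (stab T0 hk) => v; rewrite iterD; apply: (asc1 hip (hSj k) QK).
have stS : forall m x, (l <= m)%N -> iter m S x = 0 -> iter l S x = 0.
  move=> m x; apply: (stab S0 hl) => v; rewrite iterD.
  by apply: (asc1 hip (adj_sym hip (hSj l)) CL).
split.
  move=> m hm.
  have hL : (0 < lcmn k l)%N by rewrite lcmn_gt0 hk hl.
  have km : (k <= m)%N := leq_trans (dvdn_leq hL (dvdn_lcml k l)) hm.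
  have lm : (l <= m)%N := leq_trans (dvdn_leq hL (dvdn_lcmr k l)) hm.
  split=> B hB x; rewrite /kernel /= => hx.
    rewrite (uniq _ _ _ hB); apply: (kerup S0 km); apply: QK.
    exact: stT km hx.
  rewrite (uniq _ _ _ hB) in hx; apply: (kerup T0 lm); apply: CL.
  exact: stS lm hx.
split.
  move=> [hd _] B hB x; rewrite /kernel /= => hx.
  have hB1 : is_adjoint ip (iter 1 T) B by [].
  rewrite (uniq _ _ _ hB1).
  apply/(adj_ker hip _ (hSj 1)) => y.
  have rng : forall j y, exists v, T y = iter j.+1 T v.
    elim=> [|j IH] y0; first by exists y0.
    have [v hv] := IH y0.
    have : Defs.range (opow T 1) (T v) by exists v.
    rewrite -hd => -[w hw].
    exists w.
    by rewrite hv (iterSr j) -hw (iterSr j.+1) (iterSr j).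
  have [v hv] := rng k.-1 y; rewrite /= hv prednK // hSj.
  by rewrite QK ?(ip0r hip) // (kerup T0 hk).
move=> [ha _] B hB x; rewrite /kernel /= => hx.
have hB1 : is_adjoint ip (iter 1 T) B by [].
rewrite (uniq _ _ _ hB1) in hx.
have h1 : forall v, T (T v) = 0 -> T v = 0.
  move=> v h; have : kernel (opow T 2) v by [].
  by rewrite -ha.
have h2 : forall j x, iter j.+1 T x = 0 -> T x = 0.
  elim=> [|j IH] x0 //; rewrite iterSr => /IH; exact: h1.
apply: (h2 l.-1); rewrite prednK //; apply: CL.
exact: (kerup S0 hl).
Qed.
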